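(* $R_{3,3}(W_3\otimes W_3)=8$.
   Context: Identify $S^3\mathbb{C}^2$ with binary cubic forms in a basis $\{x,y\}$; $W_3=x^2y$. The partially symmetric rank $R_{3,3}(T)$ of $T\in S^3\mathbb{C}^2\otimes S^3\mathbb{C}^2$ is the minimal $r$ with $T=\sum_{i=1}^r v_{i,1}^{\otimes 3}\otimes v_{i,2}^{\otimes 3}$, $v_{i,j}\in\mathbb{C}^2$. *)

(* Defs.v *)
From HB Require Import structures.
From mathcomp Require Import all_boot all_order all_algebra.
From mathcomp Require Import complex.
From mathcomp Require Import Rstruct.
Set Implicit Arguments. Unset Strict Implicit. Unset Printing Implicit Defensive.
Import Order.TTheory GRing.Theory Num.Theory.
Local Open Scope ring_scope.

Definition C : Type := complex Rdefinitions.R.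

(* Vectors of C^2 in the basis {x, y}: index 0 is x, index 1 is y. *)
Definition vec2 := 'I_2 -> C.

(* A tensor in C^2 (x)6 = (C^2)^(x3) (x) (C^2)^(x3), via its coordinates;
   S^3 C^2 (x) S^3 C^2 is the subspace of tensors symmetric in the first
   three and in the last three indices. *)
Definition tensor33 :=
  'I_2 -> 'I_2 -> 'I_2 -> 'I_2 -> 'I_2 -> 'I_2 -> C.

Definition pure33 (v w : vec2) : tensor33 :=
  fun i1 i2 i3 j1 j2 j3 => v i1 * v i2 * v i3 * (w j1 * w j2 * w j3).

Definition has_ps_decomp (T : tensor33) (r : nat) : Prop :=
  exists (v w : 'I_r -> vec2),
    forall i1 i2 i3 j1 j2 j3,
      T i1 i2 i3 j1 j2 j3 = \sum_(k < r) pure33 (v k) (w k) i1 i2 i3 j1 j2 j3.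

Definition ps_rank_is (T : tensor33) (r : nat) : Prop :=
  has_ps_decomp T r /\ (forall s, has_ps_decomp T s -> (r <= s)%N).

(* The symmetric tensor in S^3 C^2 corresponding to the binary cubic
   W_3 = x^2 y, under the identification (a x + b y)^3 <-> v^{(x)3},
   v = (a, b): it is (e_x e_x e_y + e_x e_y e_x + e_y e_x e_x)/3. *)
Definition W3 (i1 i2 i3 : 'I_2) : C :=
  if (i1 + i2 + i3 == 1)%N then 3%:R^-1 else 0.

Definition W3W3 : tensor33 :=
  fun i1 i2 i3 j1 j2 j3 => W3 i1 i2 i3 * W3 j1 j2 j3.

(* Main.v *)
Require Import Defs.
From HB Require Import structures.
From mathcomp Require Import all_boot all_order all_algebra.
From mathcomp Require Import complex Rstruct ring zify.
Set Implicit Arguments. Unset Strict Implicit. Unset Printing Implicit Defensive.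
Import Order.TTheory GRing.Theory Num.Theory.
Local Open Scope ring_scope.

HB.instance Definition _ := Num.ClosedField.on C.

Definition o0 : 'I_2 := @Ordinal 2 0 isT.
Definition o1 : 'I_2 := @Ordinal 2 1 isT.

Lemma I2P (i : 'I_2) : i = o0 \/ i = o1.
Proof. case: i => [[|[|//]] Hi]; [left|right]; exact: val_inj. Qed.

Definition mon (i : 'I_4) (x : vec2) : C := x o0 ^+ i * x o1 ^+ (3 - i).
Definition ev3 (p : 'rV[C]_4) (x : vec2) : C := \sum_(i < 4) p 0 i * mon i x.
Definition cq2 (p : 'rV[C]_4) : C := p 0 (@Ordinal 4 2 isT).

Definition ti (i : 'I_4) (n : nat) : 'I_2 := if (n < i)%N then o0 else o1.

Lemma mon_pure (i : 'I_4) (v : vec2) : v (ti i 0) * v (ti i 1) * v (ti i 2) = mon i v.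
Proof.
rewrite /mon /ti; case: i => [[|[|[|[|//]]]] Hi] /=; ring.
Qed.

Lemma W3_ti (i : 'I_4) : W3 (ti i 0) (ti i 1) (ti i 2) = if i == @Ordinal 4 2 isT then 3%:R^-1 else 0.
Proof.
rewrite /W3 /ti; case: i => [[|[|[|[|//]]]] Hi] //=.
Qed.

Section Key.
Variables (r : nat) (al be : 'I_r -> vec2).
Hypothesis Hdec : forall i1 i2 i3 j1 j2 j3,
  W3W3 i1 i2 i3 j1 j2 j3 = \sum_(k < r) pure33 (al k) (be k) i1 i2 i3 j1 j2 j3.

Lemma Smon (i j : 'I_4) : \sum_(k < r) mon i (al k) * mon j (be k) =
  if (i == @Ordinal 4 2 isT) && (j == @Ordinal 4 2 isT) then 9%:R^-1 else 0.
Proof.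
have := Hdec (ti i 0) (ti i 1) (ti i 2) (ti j 0) (ti j 1) (ti j 2).
rewrite /W3W3 !W3_ti /pure33.
under eq_bigr => k _ do rewrite !mon_pure.
move=> <-.
case: (i == _); case: (j == _); rewrite ?mul0r ?mulr0 //.
by rewrite -invfM -natrM.
Qed.

Lemma Key (p q : 'rV[C]_4) :
  \sum_(k < r) ev3 p (al k) * ev3 q (be k) = cq2 p * cq2 q / 9%:R.
Proof.
transitivity (\sum_(i < 4) \sum_(j < 4) p 0 i * q 0 j *
                 \sum_(k < r) mon i (al k) * mon j (be k)).
  rewrite /ev3.
  under eq_bigr => k _ do rewrite big_distrl /=.
  rewrite exchange_big /=; apply: eq_bigr => i _.
  under eq_bigr => k _ do rewrite big_distrr /=.
  rewrite exchange_big /=; apply: eq_bigr => j _.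
  rewrite big_distrr /=; apply: eq_bigr => k _; ring.
under eq_bigr => i _ do under eq_bigr => j _ do rewrite Smon.
rewrite (bigD1 (@Ordinal 4 2 isT)) //= [X in _ + X]big1 ?addr0; last first.
  move=> i Hi; apply: big1 => j _; by rewrite (negbTE Hi) mulr0.
rewrite (bigD1 (@Ordinal 4 2 isT)) //= [X in _ + X]big1 ?addr0; last first.
  move=> j Hj; by rewrite (negbTE Hj) mulr0.
by [].
Qed.
End Key.
Definition i4 (n : nat) (H : (n < 4)%N) : 'I_4 := Ordinal H.

Lemma sum4 (f : 'I_4 -> C) : \sum_(i < 4) f i =
  f (@Ordinal 4 0 isT) + f (@Ordinal 4 1 isT) + f (@Ordinal 4 2 isT) + f (@Ordinal 4 3 isT).
Proof.
rewrite !big_ord_recl big_ord0 addr0 !addrA.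
by congr (_ + _ + _ + _); apply: congr1; apply: val_inj.
Qed.

Lemma ev3E (p : 'rV[C]_4) x : ev3 p x =
  p 0 (@Ordinal 4 0 isT) * x o1 ^+ 3 + p 0 (@Ordinal 4 1 isT) * x o0 * x o1 ^+ 2 +
  p 0 (@Ordinal 4 2 isT) * x o0 ^+ 2 * x o1 + p 0 (@Ordinal 4 3 isT) * x o0 ^+ 3.
Proof. rewrite /ev3 sum4 /mon /=; ring. Qed.

Definition mkc (c0 c1 c2 c3 : C) : 'rV[C]_4 := \row_(i < 4) nth 0 [:: c0; c1; c2; c3] i.

Lemma ev3_mkc c0 c1 c2 c3 x : ev3 (mkc c0 c1 c2 c3) x =
  c0 * x o1 ^+ 3 + c1 * x o0 * x o1 ^+ 2 + c2 * x o0 ^+ 2 * x o1 + c3 * x o0 ^+ 3.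
Proof. by rewrite ev3E !mxE. Qed.

Lemma cq2_mkc c0 c1 c2 c3 : cq2 (mkc c0 c1 c2 c3) = c2.
Proof. by rewrite /cq2 mxE. Qed.

Definition ev1 (L : C * C) (x : vec2) : C := L.1 * x o0 + L.2 * x o1.
Definition lin (a : vec2) : C * C := (a o1, - a o0).

Definition mul3 (L1 L2 L3 : C * C) : 'rV[C]_4 :=
  mkc (L1.2 * L2.2 * L3.2)
      (L1.1 * L2.2 * L3.2 + L1.2 * L2.1 * L3.2 + L1.2 * L2.2 * L3.1)
      (L1.1 * L2.1 * L3.2 + L1.1 * L2.2 * L3.1 + L1.2 * L2.1 * L3.1)
      (L1.1 * L2.1 * L3.1).

Lemma ev3_mul3 L1 L2 L3 x : ev3 (mul3 L1 L2 L3) x = ev1 L1 x * ev1 L2 x * ev1 L3 x.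
Proof. rewrite ev3_mkc /ev1; ring. Qed.

Lemma cq2_mul3 L1 L2 L3 : cq2 (mul3 L1 L2 L3) =
  L1.1 * L2.1 * L3.2 + L1.1 * L2.2 * L3.1 + L1.2 * L2.1 * L3.1.
Proof. by rewrite cq2_mkc. Qed.

Definition nz (a : vec2) : bool := (a o0 != 0) || (a o1 != 0).
Definition prop (a b : vec2) : bool := a o0 * b o1 == a o1 * b o0.

Lemma ev1_lin a x : (ev1 (lin a) x == 0) = prop x a.
Proof.
by rewrite /ev1 /lin /prop /= mulNr subr_eq0 mulrC [X in _ == X]mulrC.
Qed.

Lemma ev1_lin0 a x : prop x a -> ev1 (lin a) x = 0.
Proof. by rewrite -ev1_lin => /eqP. Qed.

Lemma ev1_lin_neq a x : (ev1 (lin a) x != 0) = ~~ prop x a.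
Proof. by rewrite ev1_lin. Qed.

Lemma prop_refl a : prop a a.
Proof. by rewrite /prop mulrC. Qed.

Lemma prop_sym a b : prop a b = prop b a.
Proof. by rewrite /prop eq_sym mulrC [X in _ == X]mulrC. Qed.

Lemma nz_scale (x a : vec2) : prop x a -> nz a ->
  exists l, x o0 = l * a o0 /\ x o1 = l * a o1.
Proof.
rewrite /prop /nz => /eqP H; case/orP => Ha.
  exists (x o0 / a o0); split; first by rewrite divfK.
  by apply: (mulIf Ha); rewrite mulrAC divfK // H.
exists (x o1 / a o1); split; last by rewrite divfK.
by apply: (mulIf Ha); rewrite mulrAC divfK // H.
Qed.

Lemma prop_trans a b c : nz b -> prop a b -> prop b c -> prop a c.
Proof.
move=> Hb Hab Hbc.
have [l [l0 l1]] := nz_scale Hab Hb.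
rewrite prop_sym in Hbc.
have [m [m0 m1]] := nz_scale Hbc Hb.
move: Hb; rewrite /prop /nz l0 l1 m0 m1 => _; apply/eqP; ring.
Qed.

Lemma ev3_homog (p p' : 'rV[C]_4) x a : prop x a -> nz a ->
  ev3 p x * ev3 p' a = ev3 p a * ev3 p' x.
Proof.
move=> H Ha; have [l [l0 l1]] := nz_scale H Ha.
rewrite !ev3E l0 l1; ring.
Qed.

Lemma ev3_scale (p : 'rV[C]_4) x a : prop x a -> nz a -> exists l, ev3 p x = l * ev3 p a.
Proof.
move=> H Ha; have [l [l0 l1]] := nz_scale H Ha.
exists (l ^+ 3); rewrite !ev3E l0 l1; ring.
Qed.

Lemma ev3_prop0 (p : 'rV[C]_4) x a : prop x a -> nz a -> ev3 p a = 0 -> ev3 p x = 0.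
Proof. by move=> H Ha E; have [l ->] := ev3_scale p H Ha; rewrite E mulr0. Qed.

Lemma nzN0 (a : vec2) : ~~ nz a -> a o0 = 0 /\ a o1 = 0.
Proof. by rewrite /nz negb_or !negbK => /andP[/eqP -> /eqP ->]. Qed.

Lemma ev3_nz0 (p : 'rV[C]_4) a : ~~ nz a -> ev3 p a = 0.
Proof. by move/nzN0 => [H0 H1]; rewrite ev3E H0 H1; ring. Qed.

Lemma Pq1 (b : vec2) : exists q, cq2 q != 0 /\ ev3 q b = 0.
Proof.
case: (boolP (b o1 == 0)) => Hb1.
  exists (mkc 0 0 1 0); rewrite cq2_mkc ev3_mkc (eqP Hb1); split; first exact: oner_neq0.
  ring.
exists (mul3 (lin b) (1, 0) (0, 1)); split.
  by rewrite cq2_mul3 /lin /= !(mul1r, mulr1, mul0r, mulr0, addr0, add0r).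
by rewrite ev3_mul3 ev1_lin0 ?prop_refl // !mul0r.
Qed.

Lemma Pq (b1 b2 : vec2) : exists q, [/\ cq2 q != 0, ev3 q b1 = 0 & ev3 q b2 = 0].
Proof.
case: (boolP (prop b1 b2)) => H12.
  case: (boolP (nz b1)) => Hb1.
    have [q [Hq Hq1]] := Pq1 b1; exists q; split => //.
    have H21 : prop b2 b1 by rewrite prop_sym.
    exact: (ev3_prop0 H21 Hb1 Hq1).
  have [q [Hq Hq2]] := Pq1 b2; exists q; split => //; exact: ev3_nz0.
move: H12; rewrite /prop => H12.
case: (boolP (b1 o1 * b2 o1 == 0)) => H11.
- exists (mul3 (lin b1) (lin b2) (1, 0)); split.
  + rewrite cq2_mul3 /lin /= !(mul1r, mulr1, mul0r, mulr0, addr0, add0r).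
    apply: contra H12 => /eqP H; apply/eqP.
    have E : (b1 o0 * b2 o1 - b1 o1 * b2 o0) ^+ 2 =
      (b1 o1 * - b2 o0 + - b1 o0 * b2 o1) ^+ 2 - 4%:R * (b1 o0 * b2 o0) * (b1 o1 * b2 o1) by ring.
    move: E; rewrite H (eqP H11) expr0n /= mulr0 subrr => /eqP.
    by rewrite expf_eq0 /= subr_eq0 => /eqP.
  + by rewrite ev3_mul3 ev1_lin0 ?prop_refl // !mul0r.
  + by rewrite ev3_mul3 [ev1 (lin b2) _]ev1_lin0 ?prop_refl // mulr0 mul0r.
- exists (mul3 (lin b1) (lin b2) (0, 1)); split.
  + by rewrite cq2_mul3 /lin /= !(mul1r, mulr1, mul0r, mulr0, addr0, add0r).
  + by rewrite ev3_mul3 ev1_lin0 ?prop_refl // !mul0r.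
  + by rewrite ev3_mul3 [ev1 (lin b2) _]ev1_lin0 ?prop_refl // mulr0 mul0r.
Qed.

Lemma ev3D (p q : 'rV[C]_4) x : ev3 (p + q) x = ev3 p x + ev3 q x.
Proof. rewrite !ev3E !mxE; ring. Qed.
Lemma ev3Z c (p : 'rV[C]_4) x : ev3 (c *: p) x = c * ev3 p x.
Proof. rewrite !ev3E !mxE; ring. Qed.
Lemma ev3N (p : 'rV[C]_4) x : ev3 (- p) x = - ev3 p x.
Proof. rewrite !ev3E !mxE; ring. Qed.
Lemma ev3B (p q : 'rV[C]_4) x : ev3 (p - q) x = ev3 p x - ev3 q x.
Proof. by rewrite ev3D ev3N. Qed.
Lemma ev3_0 x : ev3 0 x = 0.
Proof. rewrite !ev3E !mxE; ring. Qed.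
Lemma ev3_sum (I : finType) (A : {pred I}) (F : I -> 'rV[C]_4) x :
  ev3 (\sum_(i in A) F i) x = \sum_(i in A) ev3 (F i) x.
Proof. exact: (big_morph (fun p => ev3 p x) (fun p q => ev3D p q x) (ev3_0 x)). Qed.

Lemma cq2D (p q : 'rV[C]_4) : cq2 (p + q) = cq2 p + cq2 q.
Proof. by rewrite /cq2 mxE. Qed.
Lemma cq2Z c (p : 'rV[C]_4) : cq2 (c *: p) = c * cq2 p.
Proof. by rewrite /cq2 mxE. Qed.
Lemma cq2N (p : 'rV[C]_4) : cq2 (- p) = - cq2 p.
Proof. by rewrite /cq2 mxE. Qed.
Lemma cq2B (p q : 'rV[C]_4) : cq2 (p - q) = cq2 p - cq2 q.
Proof. by rewrite cq2D cq2N. Qed.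
Lemma cq2_0 : cq2 0 = 0.
Proof. by rewrite /cq2 mxE. Qed.
Lemma cq2_sum (I : finType) (A : {pred I}) (F : I -> 'rV[C]_4) :
  cq2 (\sum_(i in A) F i) = \sum_(i in A) cq2 (F i).
Proof. exact: (big_morph cq2 cq2D cq2_0). Qed.

Definition filler (a : vec2) : C * C := if a o0 != 0 then (1, 0) else (0, 1).

Lemma filler_nz a : nz a -> ev1 (filler a) a != 0.
Proof.
rewrite /nz /filler /ev1; case: (boolP (a o0 != 0)) => /= H.
  by rewrite mul1r mul0r addr0.
by rewrite mul0r mul1r add0r.
Qed.

Lemma enum_small (T : finType) (S : {set T}) (x0 : T) n : (#|S| <= n)%N ->
  forall r, r \in S -> exists2 i, (i < n)%N & r = nth x0 (enum S) i.
Proof.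
move=> Hn r Hr; exists (index r (enum S)).
  by apply: leq_trans Hn; rewrite cardE index_mem mem_enum.
by rewrite nth_index // mem_enum.
Qed.

Definition e0v : vec2 := fun i => if i == o0 then 1 else 0.
Lemma nz_e0v : nz e0v.
Proof. by rewrite /nz /e0v eqxx oner_neq0. Qed.
Definition nzify (v : vec2) : vec2 := if nz v then v else e0v.
Lemma nz_nzify v : nz (nzify v).
Proof. rewrite /nzify; case: ifP => // _; exact: nz_e0v. Qed.
Lemma nzifyE v : nz v -> nzify v = v.
Proof. by rewrite /nzify => ->. Qed.

Definition rho (m : C * C) : vec2 := fun i => if i == o0 then m.2 else - m.1.
Lemma nz_rho m : (m.1 != 0) || (m.2 != 0) -> nz (rho m).
Proof.
rewrite /nz /rho /=; case/orP => H; first by rewrite oppr_eq0 H orbT.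
by rewrite H.
Qed.
Lemma ev1_rho m x : ev1 m x = 0 -> prop x (rho m).
Proof.
rewrite /ev1 /prop /rho /= => H.
have E : x o0 * - m.1 - x o1 * m.2 = - (m.1 * x o0 + m.2 * x o1) by ring.
by move: E; rewrite H oppr0 => /eqP; rewrite subr_eq0.
Qed.

Lemma Q0ex (b1 b2 : vec2) : exists m : C * C,
  (m.1 != 0) || (m.2 != 0) /\ cq2 (mul3 (lin b1) (lin b2) m) = 0.
Proof.
set a := (lin b1).1 * (lin b2).1.
set b := (lin b1).1 * (lin b2).2 + (lin b1).2 * (lin b2).1.
have E : forall m : C * C, cq2 (mul3 (lin b1) (lin b2) m) = a * m.2 + b * m.1.
  move=> m; rewrite cq2_mul3 /a /b; ring.
case: (boolP ((a == 0) && (b == 0))) => Hab.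
  exists (1, 0); rewrite E /= oner_neq0; split => //.
  by case/andP: Hab => /eqP -> /eqP ->; ring.
exists (a, - b); rewrite E /=; split; last by ring.
by move: Hab; rewrite negb_and oppr_eq0.
Qed.

Lemma roots_form (d n : nat) (c : nat -> C) (f : 'I_n -> vec2) :
  (d < n)%N -> (forall i, nz (f i)) -> (forall i j, i != j -> ~~ prop (f i) (f j)) ->
  (forall i, \sum_(e < d.+1) c e * (f i o0) ^+ e * (f i o1) ^+ (d - e) = 0) ->
  forall e, (e <= d)%N -> c e = 0.
Proof.
move=> Hdn Hnz Hnp Hz.
pose p : {poly C} := \poly_(e < d.+1) c e.
suff p0 : p = 0.
  move=> e He; have := @coef_poly C d.+1 c e; rewrite -/p p0 coef0 ltnS He => ->; by [].
have hev : forall a : vec2, a o1 != 0 ->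
    \sum_(e < d.+1) c e * (a o0) ^+ e * (a o1) ^+ (d - e) = a o1 ^+ d * p.[a o0 / a o1].
  move=> a Ha; rewrite horner_poly big_distrr; apply: eq_bigr => e _ /=.
  have He : (e <= d)%N by rewrite -ltnS.
  have E : a o1 ^+ d = a o1 ^+ (d - e) * a o1 ^+ e by rewrite -exprD subnK.
  rewrite E expr_div_n; field.
  by rewrite expf_neq0.
set P := [pred i | f i o1 != 0].
have le1 : (#|predC P| <= 1)%N.
  apply/card_le1_eqP => i j; rewrite !inE /= !negbK => /eqP Hi /eqP Hj.
  apply/eqP; apply/negPn/negP => Hne; have := Hnp _ _ Hne.
  by rewrite /prop Hi Hj mulr0 mul0r eqxx.
have HP : (#|P| + #|predC P| = n)%N by rewrite cardC card_ord.
pose rs := [seq f i o0 / f i o1 | i <- enum P].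
have Hrs_size : size rs = #|P| by rewrite size_map -cardE.
have Hrs_uniq : uniq rs.
  rewrite map_inj_in_uniq ?enum_uniq // => i j; rewrite !mem_enum !inE /= => Hi Hj E.
  apply/eqP; apply/negPn/negP => Hne; have := Hnp _ _ Hne.
  suff -> : prop (f i) (f j) by [].
  rewrite /prop; apply/eqP.
  have H1 : f i o0 = f i o0 / f i o1 * f i o1 by rewrite divfK.
  have H2 : f j o0 = f j o0 / f j o1 * f j o1 by rewrite divfK.
  rewrite {1}H1 {1}H2 E; ring.
have Hrs_root : all (root p) rs.
  apply/allP => x; case/mapP => i; rewrite mem_enum inE /= => Hi ->.
  have := Hz i; rewrite hev // => /eqP; rewrite mulf_eq0 expf_eq0 (negbTE Hi) andbF /=.
  by [].
apply/eqP; apply/negPn/negP => Hp.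
have Hlt := max_poly_roots Hp Hrs_root Hrs_uniq.
have Hsp : (size p <= d.+1)%N by apply: size_poly.
case: (boolP (#|predC P| == 0%N)) => H0.
  move: Hlt; rewrite Hrs_size; move: H0 => /eqP H0; rewrite H0 addn0 in HP; rewrite HP.
  move=> Hlt; have := leq_trans Hlt Hsp; rewrite ltnS leqNgt Hdn //.
have [i0 Hi0] : exists i0, i0 \in predC P.
  by apply/card_gt0P; rewrite lt0n.
move: Hi0; rewrite !inE /= negbK => /eqP Hi0.
have Hcd : c d = 0.
  have := Hz i0; rewrite big_ord_recr /= big1.
    rewrite add0r subnn expr0 mulr1 => /eqP; rewrite mulf_eq0 expf_eq0.
    have : f i0 o0 != 0 by move: (Hnz i0); rewrite /nz Hi0 eqxx orbF.
    by move=> /negbTE ->; rewrite andbF orbF => /eqP.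
  move=> e _; rewrite Hi0 expr0n.
  have : (d - e != 0)%N by rewrite subn_eq0 -ltnNge ltn_ord.
  by move/negbTE => -> ; rewrite mulr0.
have Hsp' : (size p <= d)%N.
  apply/leq_sizeP => j Hj; rewrite coef_poly; case: ltnP => // Hjd.
  by have -> : j = d by apply/eqP; rewrite eqn_leq Hj -ltnS Hjd.
move: Hlt; rewrite Hrs_size => Hlt.
have := leq_trans Hlt Hsp'; lia.
Qed.

Lemma NZK (m n : nat) (A : 'M[C]_(m, n)) : (n < m)%N ->
  exists x : 'rV[C]_m, x != 0 /\ x *m A = 0.
Proof.
move=> Hnm.
have Hk : kermx A != 0.
  rewrite -mxrank_eq0 mxrank_ker subn_eq0 -ltnNge.
  exact: leq_ltn_trans (rank_leq_col A) Hnm.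
have [i Hi] : exists i, row i (kermx A) != 0.
  apply/existsP; apply: contraR Hk; rewrite negb_exists => /forallP H.
  apply/eqP/row_matrixP => i; rewrite row0; exact/eqP/negPn/H.
exists (row i (kermx A)); split => //.
by rewrite -row_mul mulmx_ker row0.
Qed.

Lemma prod3_zero (u0 u1 u2 w0 w1 w2 : C) :
  (forall y0 y1 y2 : C, (u0 * y0 + u1 * y1 + u2 * y2) * (w0 * y0 + w1 * y1 + w2 * y2) = 0) ->
  (u0 = 0 /\ u1 = 0 /\ u2 = 0) \/ (w0 = 0 /\ w1 = 0 /\ w2 = 0).
Proof.
move=> H.
have d0 : u0 * w0 = 0 by have := H 1 0 0; rewrite !(mulr1, mulr0, addr0).
have d1 : u1 * w1 = 0 by have := H 0 1 0; rewrite !(mulr1, mulr0, addr0, add0r).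
have d2 : u2 * w2 = 0 by have := H 0 0 1; rewrite !(mulr1, mulr0, addr0, add0r).
have off : forall a b c d : C, a * c = 0 -> b * d = 0 -> (a + b) * (c + d) = 0 -> a * d = 0.
  move=> a b c d Hac Hbd Hs.
  have E : (a * d) ^+ 2 = a * d * ((a + b) * (c + d)) - (a * c) * (b * d) - (a * c) * (a * d) - (a * d) * (b * d) by ring.
  by move: E; rewrite Hs Hac Hbd !(mulr0, mul0r, subr0) => /eqP; rewrite expf_eq0 /= => /eqP.
have o01 : u0 * w1 = 0 by apply: (off _ u1 _ w1 d0 d1); have := H 1 1 0; rewrite !(mulr1, mulr0, addr0).
have o10 : u1 * w0 = 0 by apply: (off _ u0 _ w0 d1 d0); have := H 1 1 0; rewrite !(mulr1, mulr0, addr0) addrC [w0 + _]addrC.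
have o02 : u0 * w2 = 0 by apply: (off _ u2 _ w2 d0 d2); have := H 1 0 1; rewrite !(mulr1, mulr0, addr0).
have o20 : u2 * w0 = 0 by apply: (off _ u0 _ w0 d2 d0); have := H 1 0 1; rewrite !(mulr1, mulr0, addr0) addrC [w0 + _]addrC.
have o12 : u1 * w2 = 0 by apply: (off _ u2 _ w2 d1 d2); have := H 0 1 1; rewrite !(mulr1, mulr0, addr0, add0r).
have o21 : u2 * w1 = 0 by apply: (off _ u1 _ w1 d2 d1); have := H 0 1 1; rewrite !(mulr1, mulr0, addr0, add0r) addrC [w1 + _]addrC.
case: (eqVneq u0 0) => [U0|U0].
  case: (eqVneq u1 0) => [U1|U1].
    case: (eqVneq u2 0) => [U2|U2]; first by left.
    right; split; [|split]; apply/eqP; rewrite -(mulrI_eq0 _ (lregP U2)); apply/eqP => //.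
  right; split; [|split]; apply/eqP; rewrite -(mulrI_eq0 _ (lregP U1)); apply/eqP => //.
right; split; [|split]; apply/eqP; rewrite -(mulrI_eq0 _ (lregP U0)); apply/eqP => //.
Qed.

Lemma par_scale (a0 a1 a3 b0 b1 b3 : C) : (a0 != 0) || (a1 != 0) || (a3 != 0) ->
  b1 * a3 - b3 * a1 = 0 -> b3 * a0 - b0 * a3 = 0 -> b0 * a1 - b1 * a0 = 0 ->
  exists l, [/\ b0 = l * a0, b1 = l * a1 & b3 = l * a3].
Proof.
move=> Ha /eqP E1 /eqP E2 /eqP E3; rewrite subr_eq0 in E1; rewrite subr_eq0 in E2; rewrite subr_eq0 in E3.
have key : forall x y u v : C, x != 0 -> u * x == v * y -> u = v / x * y.
  move=> x y u v Hx /eqP H; apply: (mulIf Hx); rewrite H; field => //.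
case/orP: Ha => [/orP[]|] Ha.
- exists (b0 / a0); split; first by rewrite divfK.
  + by apply: key => //; rewrite eq_sym.
  + by apply: key => //.
- exists (b1 / a1); split.
  + by apply: key => //.
  + by rewrite divfK.
  + by apply: key => //; rewrite eq_sym.
- exists (b3 / a3); split.
  + by apply: key => //; rewrite eq_sym.
  + by apply: key => //.
  + by rewrite divfK.
Qed.

Definition cf (k : 'I_8) : C :=
  nth 0 [:: 180%:R^-1; - 180%:R^-1; - 180%:R^-1; 180%:R^-1; - 72%:R^-1; 72%:R^-1; - 54%:R^-1; 54%:R^-1] k.
Definition Lf (k : 'I_8) : C * C :=
  nth (0, 0) [:: (1, 1); (1, 1); (1, -1); (1, -1); (0, 1); (0, 1); (5%:R, 3%:R); (5%:R, - 3%:R)] k.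
Definition Mf (k : 'I_8) : C * C :=
  nth (0, 0) [:: (1, 5%:R); (1, - 5%:R); (1, 5%:R); (1, - 5%:R); (1, 4%:R); (1, - 4%:R); (0, 1); (0, 1)] k.
Definition vp (L : C * C) : vec2 := fun i => if i == o0 then L.1 else L.2.

Definition vU (k : 'I_8) : vec2 := fun i => 3.-root (cf k) * vp (Lf k) i.
Definition wU (k : 'I_8) : vec2 := vp (Mf k).

Lemma pureU k i1 i2 i3 j1 j2 j3 : pure33 (vU k) (wU k) i1 i2 i3 j1 j2 j3 =
  cf k * (vp (Lf k) i1 * vp (Lf k) i2 * vp (Lf k) i3) * (vp (Mf k) j1 * vp (Mf k) j2 * vp (Mf k) j3).
Proof.
rewrite /pure33 /vU /wU.
set r := 3.-root (cf k).
have E : cf k = r ^+ 3 by rewrite /r rootCK.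
rewrite [in RHS]E; ring.
Qed.

Lemma upper : has_ps_decomp W3W3 8.
Proof.
exists vU, wU => i1 i2 i3 j1 j2 j3.
under eq_bigr => k _ do rewrite pureU.
rewrite !big_ord_recr big_ord0 /= /W3W3 /W3.
case: (I2P i1) => ->; case: (I2P i2) => ->; case: (I2P i3) => ->;
case: (I2P j1) => ->; case: (I2P j2) => ->; case: (I2P j3) => ->;
rewrite /cf /Lf /Mf /vp /=; field; by rewrite ?pnatr_eq0.
Qed.

Section Main.
Variables (al be : 'I_7 -> vec2).
Hypothesis K : forall p q : 'rV[C]_4,
  \sum_(k < 7) ev3 p (al k) * ev3 q (be k) = cq2 p * cq2 q / 9%:R.

Definition live (k : 'I_7) : bool := nz (al k) && nz (be k).

Lemma dead0 p q k : ~~ live k -> ev3 p (al k) * ev3 q (be k) = 0.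
Proof.
rewrite /live negb_and => /orP[H|H].
  by rewrite (ev3_nz0 p H) mul0r.
by rewrite (ev3_nz0 q H) mulr0.
Qed.

Lemma nine_neq0 : (9%:R : C) != 0.
Proof. by rewrite pnatr_eq0. Qed.

Lemma WH (p : 'rV[C]_4) (i j : 'I_7) :
  (forall k, live k -> k != i -> k != j -> ev3 p (al k) = 0) -> cq2 p = 0.
Proof.
move=> Hp; have [q [Hq Hqi Hqj]] := Pq (be i) (be j).
have := K p q; rewrite big1.
  move/esym/eqP; rewrite mulf_eq0 invr_eq0 (negbTE nine_neq0) orbF mulf_eq0 (negbTE Hq) orbF.
  by move/eqP.
move=> k _; case: (boolP (live k)) => Hk; last exact: dead0.
case: (eqVneq k i) => [->|Hki]; first by rewrite Hqi mulr0.
case: (eqVneq k j) => [->|Hkj]; first by rewrite Hqj mulr0.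
by rewrite Hp // mul0r.
Qed.

Lemma WHy (q : 'rV[C]_4) (i j : 'I_7) :
  (forall k, live k -> k != i -> k != j -> ev3 q (be k) = 0) -> cq2 q = 0.
Proof.
move=> Hq; have [p [Hp Hpi Hpj]] := Pq (al i) (al j).
have := K p q; rewrite big1.
  move/esym/eqP; rewrite mulf_eq0 invr_eq0 (negbTE nine_neq0) orbF mulf_eq0 (negbTE Hp) /=.
  by move/eqP.
move=> k _; case: (boolP (live k)) => Hk; last exact: dead0.
case: (eqVneq k i) => [->|Hki]; first by rewrite Hpi mul0r.
case: (eqVneq k j) => [->|Hkj]; first by rewrite Hpj mul0r.
by rewrite Hq // mulr0.
Qed.

Definition R : {set 'I_7} :=
  [set k | live k && [forall l : 'I_7, ((l < k)%N && live l) ==> ~~ prop (al l) (al k)]].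

Definition cls (r : 'I_7) : {set 'I_7} := [set k | live k && prop (al k) (al r)].

Lemma R_live r : r \in R -> live r.
Proof. by rewrite inE => /andP[]. Qed.

Lemma rep_ex k : live k -> exists2 r, r \in R & prop (al k) (al r).
Proof.
move=> Hk.
have Pk : live k && prop (al k) (al k) by rewrite Hk prop_refl.
case: (@arg_minnP _ k (fun l : 'I_7 => live l && prop (al l) (al k)) val Pk) => r /andP[Hr Hrk] Hmin.
exists r; last by rewrite prop_sym.
rewrite inE Hr /=; apply/forallP => l; apply/implyP => /andP[Hlr Hl].
apply/negP => Hlr'.
have : (r <= l)%N.
  apply: Hmin; rewrite Hl /=; apply: (prop_trans _ Hlr') => //.
  by move: Hr => /andP[].
by rewrite leqNgt Hlr.
Qed.

Lemma R_np r r' : r \in R -> r' \in R -> r != r' -> ~~ prop (al r) (al r').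
Proof.
have key : forall a b, a \in R -> b \in R -> (b < a)%N -> ~~ prop (al a) (al b).
  move=> a b Ha Hb Hba; move: Ha; rewrite inE => /andP[_ /forallP /(_ b)].
  by rewrite Hba (R_live Hb) /= prop_sym.
move=> Hr Hr' Hne; case: (ltngtP r r') => H.
- by rewrite prop_sym; apply: key.
- exact: key.
- by move: Hne; rewrite (val_inj H) eqxx.
Qed.

Lemma rep_uniq k r r' : live k -> r \in R -> r' \in R ->
  prop (al k) (al r) -> prop (al k) (al r') -> r = r'.
Proof.
move=> Hk Hr Hr' H1 H2; apply/eqP; apply/negPn; apply/negP => Hne.
have := R_np Hr Hr' Hne; rewrite (prop_trans _ _ H2) //.
  by move: Hk => /andP[].
by rewrite prop_sym.
Qed.

Lemma cls_self r : r \in R -> r \in cls r.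
Proof. by move=> Hr; rewrite inE (R_live Hr) prop_refl. Qed.

Lemma sum_cls : (\sum_(r in R) #|cls r| <= 7)%N.
Proof.
have -> : (\sum_(r in R) #|cls r| = \sum_(k < 7) #|[set r in R | k \in cls r]|)%N.
  transitivity (\sum_(r in R) \sum_(k < 7) (k \in cls r : nat))%N.
    by apply: eq_bigr => r _; rewrite -sum1_card big_mkcond /=.
  rewrite exchange_big /=; apply: eq_bigr => k _.
  rewrite (eq_bigr (fun r => if k \in cls r then 1 else 0)%N); last by move=> r _; case: (k \in cls r).
  rewrite -big_mkcondr sum1_card; apply: eq_card => r; by rewrite [RHS]inE.
apply: (@leq_trans (\sum_(k < 7) 1)%N); last by rewrite sum1_card card_ord.
apply: leq_sum => k _.
apply/card_le1_eqP => r r'; rewrite [r \in _]inE [r' \in _]inE => /andP[Hr Hkr] /andP[Hr' Hkr'].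
move: Hkr Hkr'; rewrite !inE => /andP[Hk Hkr] /andP[_ Hkr'].
symmetry; exact: rep_uniq Hk Hr Hr' Hkr Hkr'.
Qed.


Definition killp (S : {set 'I_7}) (t : 'I_7) : 'rV[C]_4 :=
  let l := [seq lin (al r) | r <- enum S] in
  let f := filler (al t) in mul3 (nth f l 0) (nth f l 1) (nth f l 2).

Lemma killp_kill (S : {set 'I_7}) (t r : 'I_7) (x : vec2) : (#|S| <= 3)%N -> r \in S -> prop x (al r) ->
  ev3 (killp S t) x = 0.
Proof.
move=> HS Hr Hx.
have Hi : (index r (enum S) < size (enum S))%N by rewrite index_mem mem_enum.
have Hs : (size (enum S) <= 3)%N by rewrite -cardE.
have E : nth (filler (al t)) [seq lin (al r) | r <- enum S] (index r (enum S)) = lin (al r).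
  by rewrite (nth_map ord0) // nth_index // mem_enum.
have E0 : ev1 (lin (al r)) x = 0 by apply: ev1_lin0.
rewrite /killp ev3_mul3.
move: E Hi; case: (index r (enum S)) => [|[|[|i]]] E Hi.
- by rewrite E E0 !mul0r.
- by rewrite E E0 mulr0 mul0r.
- by rewrite E E0 mulr0.
- by move: (leq_trans Hi Hs).
Qed.

Lemma killp_nz (S : {set 'I_7}) (t : 'I_7) : nz (al t) -> (forall r, r \in S -> ~~ prop (al t) (al r)) ->
  ev3 (killp S t) (al t) != 0.
Proof.
move=> Ht HS.
have F : forall i, ev1 (nth (filler (al t)) [seq lin (al r) | r <- enum S] i) (al t) != 0.
  move=> i; case: (ltnP i (size (enum S))) => Hi.
    rewrite (nth_map ord0) // ev1_lin_neq; apply: HS.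
    by rewrite -mem_enum mem_nth.
  by rewrite nth_default ?size_map // filler_nz.
by rewrite /killp ev3_mul3 !mulf_neq0.
Qed.

Lemma live_nzal k : live k -> nz (al k).
Proof. by case/andP. Qed.
Lemma live_nzbe k : live k -> nz (be k).
Proof. by case/andP. Qed.

Lemma kill_notin (S : {set 'I_7}) t k : (#|S| <= 3)%N -> live k ->
  (forall r, r \in R -> r \notin S -> k \notin cls r) -> ev3 (killp S t) (al k) = 0.
Proof.
move=> HS Hk H; have [r Hr Hkr] := rep_ex Hk.
have HrS : r \in S.
  apply/negPn/negP => /(H r Hr); by rewrite inE Hk Hkr.
exact: killp_kill HS HrS Hkr.
Qed.

Lemma sum_sub (B : {set 'I_7}) (F : 'I_7 -> nat) : B \subset R ->
  (\sum_(r in B) F r <= \sum_(r in R) F r)%N.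
Proof.
move=> /subsetP HBR.
exact: (sub_le_big leqnn (fun x y => leq_addr y x) F HBR).
Qed.

Lemma cardRD1 r : r \in R -> #|R :\ r| = (#|R| - 1)%N.
Proof. by move=> Hr; rewrite (cardsD1 r R) Hr add1n subn1. Qed.

Lemma A4 : (#|R| <= 4)%N -> False.
Proof.
move=> HR.
set B := [set r in R | (2 < #|cls r|)%N].
have inB r : (r \in B) = (r \in R) && (2 < #|cls r|)%N by rewrite inE.
have HBR : B \subset R by apply/subsetP => r; rewrite inB => /andP[].
have HB : (#|B| <= 2)%N.
  have : (#|B| * 3 <= 7)%N.
    rewrite -sum_nat_const; apply: leq_trans (sum_cls); apply: leq_trans (sum_sub _ HBR).
    by apply: leq_sum => r; rewrite inB => /andP[].
  lia.
have Hcov := enum_small ord0 HB.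
set r1 := nth ord0 (enum B) 0; set r2 := nth ord0 (enum B) 1.
have [p0 [Hp0 H1 H2]] := Pq (al r1) (al r2).
have HpB : forall r, r \in B -> ev3 p0 (al r) = 0.
  move=> r /Hcov [[|[|i]] Hi ->] //.
set pr := fun r => killp (R :\ r) r.
have HprS : forall r, r \in R -> (#|R :\ r| <= 3)%N.
  by move=> r Hr; rewrite cardRD1 //; lia.
have pr_kill : forall r r', r \in R -> r' \in R -> r' != r -> ev3 (pr r) (al r') = 0.
  move=> r r' Hr Hr' Hne.
  have Hin : r' \in R :\ r by rewrite in_setD1 Hne Hr'.
  exact: (killp_kill _ (HprS r Hr) Hin (prop_refl _)).
have pr_nz : forall r, r \in R -> ev3 (pr r) (al r) != 0.
  move=> r Hr; apply: killp_nz; first exact: (live_nzal (R_live Hr)).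
  move=> r'; rewrite in_setD1 => /andP[Hne Hr']; apply: R_np => //.
  by rewrite eq_sym.
set c := fun r => ev3 p0 (al r) / ev3 (pr r) (al r).
set ps := p0 - \sum_(r in R :\: B) c r *: pr r.
have cpr : forall r, r \in R :\: B -> cq2 (pr r) = 0.
  move=> r; rewrite in_setD inB => /andP[HrB HrR].
  have Hc : (#|cls r| <= 2)%N by move: HrB; rewrite HrR /= -leqNgt.
  have Hcov2 := enum_small ord0 Hc.
  apply: (@WH _ (nth ord0 (enum (cls r)) 0) (nth ord0 (enum (cls r)) 1)) => k Hk Hki Hkj.
  apply: kill_notin => //; first exact: HprS.
  move=> r' Hr'; rewrite in_setD1 Hr' andbT negbK => /eqP ->.
  apply/negP => /Hcov2 [[|[|i]] Hi Ek] //.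
    by move: Hki; rewrite Ek eqxx.
  by move: Hkj; rewrite Ek eqxx.
have Hps : forall r', r' \in R -> ev3 ps (al r') = 0.
  move=> r' Hr'; rewrite /ps ev3B ev3_sum.
  case: (boolP (r' \in B)) => Hr'B.
    rewrite HpB // sub0r big1 ?oppr0 // => r; rewrite in_setD => /andP[HrB HrR].
    rewrite ev3Z pr_kill ?mulr0 //.
    by apply: contraNneq HrB => <-.
  have Hr'S : r' \in R :\: B by rewrite in_setD Hr'B.
  rewrite (bigD1 r') //= big1 ?addr0.
    by rewrite ev3Z /c divfK ?subrr // pr_nz.
  move=> r /andP[]; rewrite in_setD => /andP[HrB HrR] Hne.
  by rewrite ev3Z pr_kill ?mulr0 // eq_sym.
have Hps_live : forall k, live k -> ev3 ps (al k) = 0.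
  move=> k Hk; have [r Hr Hkr] := rep_ex Hk.
  apply: (ev3_prop0 Hkr); first exact: (live_nzal (R_live Hr)).
  exact: Hps.
have := K ps (mkc 0 0 1 0).
rewrite big1; last first.
  move=> k _; case: (boolP (live k)) => Hk; last exact: dead0.
  by rewrite Hps_live // mul0r.
rewrite cq2_mkc mulr1 /ps cq2B cq2_sum big1 ?subr0; last first.
  by move=> r Hr; rewrite cq2Z cpr // mulr0.
move/esym/eqP; rewrite mulf_eq0 invr_eq0 (negbTE nine_neq0) orbF.
by rewrite (negbTE Hp0).
Qed.

Lemma sum_bool_card (A : {set 'I_7}) (P : pred 'I_7) :
  (\sum_(r in A) (P r : nat))%N = #|[set r in A | P r]|.
Proof.
rewrite (eq_bigr (fun r => if P r then 1 else 0)%N); last by move=> r _; case: (P r).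
rewrite -big_mkcondr sum1_card; apply: eq_card => r; by rewrite [RHS]inE.
Qed.

Lemma count_big : (#|R| + #|[set r in R | (1 < #|cls r|)%N]| <= 7)%N.
Proof.
apply: leq_trans (sum_cls).
rewrite -sum_bool_card -sum1_card -big_split /=.
apply: leq_sum => r Hr.
have H0 : (0 < #|cls r|)%N by apply/card_gt0P; exists r; exact: cls_self Hr.
case: (ltnP 1 #|cls r|) => //= _; by rewrite addn0.
Qed.

Lemma single_cls r k : r \in R -> (#|cls r| <= 1)%N -> k \in cls r -> k = r.
Proof.
move=> Hr H1 Hk; move/card_le1_eqP: H1 => H1.
by rewrite (H1 k r Hk (cls_self Hr)).
Qed.

Lemma card3_elems (S : {set 'I_7}) : (3 <= #|S|)%N ->
  exists i j l, [/\ i \in S, j \in S, l \in S & [/\ i != j, i != l & j != l]].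
Proof.
move=> H3; rewrite cardE in H3.
have Hu := enum_uniq (mem S).
exists (nth ord0 (enum S) 0), (nth ord0 (enum S) 1), (nth ord0 (enum S) 2).
split; try by rewrite -mem_enum mem_nth //; apply: leq_trans H3.
split; by rewrite nth_uniq //; apply: leq_trans H3.
Qed.

Lemma cardRD2 (i j : 'I_7) : i \in R -> j \in R -> (#|R :\: [set i; j]| <= #|R| - 2 + (i == j))%N.
Proof.
move=> Hi Hj; rewrite cardsD.
have -> : R :&: [set i; j] = [set i; j].
  apply/setIidPr/subsetP => x; rewrite in_set2 => /orP[] /eqP ->; by [].
rewrite cards2; case: (i == j) => /=; lia.
Qed.

Lemma A5 : #|R| = 5%N -> False.
Proof.
move=> HR.
set B2 := [set r in R | (1 < #|cls r|)%N].
have inB2 r : (r \in B2) = (r \in R) && (1 < #|cls r|)%N by rewrite inE.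
have HB2R : B2 \subset R by apply/subsetP => r; rewrite inB2 => /andP[].
have HB2 := count_big; rewrite -/B2 HR in HB2.
set S1 := R :\: B2.
have HS1 : (3 <= #|S1|)%N.
  rewrite cardsD (setIidPr HB2R) HR; lia.
have S1R r : r \in S1 -> r \in R by rewrite in_setD => /andP[].
have S1c r : r \in S1 -> (#|cls r| <= 1)%N.
  by rewrite in_setD inB2 => /andP[+ Hr]; rewrite Hr /= -leqNgt.
have S1k r k : r \in S1 -> k \in cls r -> k = r.
  by move=> Hr; apply: single_cls (S1R _ Hr) (S1c _ Hr).
have [i [j [l [Hi Hj Hl [Hij Hil Hjl]]]]] := card3_elems HS1.
have [qs [Hqs Hqsi]] := Pq1 (be i).
have step : forall x, x \in S1 -> x != i -> ev3 qs (be x) = 0.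
  move=> x Hx Hxi.
  set S := R :\: [set i; x].
  have HS : (#|S| <= 3)%N.
    have := cardRD2 (S1R _ Hi) (S1R _ Hx); rewrite HR eq_sym (negbTE Hxi) addn0.
    by move/leq_trans; apply.
  set p := killp S x.
  have kill : forall k, live k -> k != i -> k != x -> ev3 p (al k) = 0.
    move=> k Hk Hki Hkx; apply: kill_notin => // r Hr.
    rewrite in_setD Hr andbT negbK in_set2 => /orP[] /eqP -> ; apply/negP => Hkr.
      by move: Hki; rewrite (S1k _ _ Hi Hkr) eqxx.
    by move: Hkx; rewrite (S1k _ _ Hx Hkr) eqxx.
  have Hp2 : cq2 p = 0 by apply: (WH (i := i) (j := x)).
  have Hpx : ev3 p (al x) != 0.
    apply: killp_nz; first exact: (live_nzal (R_live (S1R _ Hx))).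
    move=> r; rewrite in_setD in_set2 => /andP[Hr HrR]; apply: R_np => //; first exact: S1R.
    by apply: (contraNneq _ Hr) => <-; rewrite eqxx orbT.
  have := K p qs; rewrite Hp2 mul0r mul0r (bigD1 x) //= big1 ?addr0.
    by move/eqP; rewrite mulf_eq0 (negbTE Hpx) /= => /eqP.
  move=> k Hkx; case: (boolP (live k)) => Hk; last exact: dead0.
  case: (eqVneq k i) => [->|Hki]; first by rewrite Hqsi mulr0.
  by rewrite kill // mul0r.
have Hqj : ev3 qs (be j) = 0 by apply: step => //; rewrite eq_sym.
have Hql : ev3 qs (be l) = 0 by apply: step => //; rewrite eq_sym.
set O := R :\: [set i; j; l].
have HO : (#|O| <= 2)%N.
  have HT : [set i; j; l] \subset R.
    apply/subsetP => y Hy; have : (y == i) || (y == j) || (y == l) by move: Hy; rewrite !inE.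
    by case/orP => [/orP[]|] /eqP ->; apply: S1R.
  have cT : #|[set i; j; l]| = 3%N.
    have -> : [set i; j; l] = i |: [set j; l] by apply/setP => y; rewrite !inE orbA.
    by rewrite cardsU1 cards2 !inE negb_or Hij Hil Hjl.
  by rewrite /O cardsD (setIidPr HT) cT HR.
have HcovO := enum_small ord0 HO.
have [pp [Hpp Hppa Hppb]] := Pq (al (nth ord0 (enum O) 0)) (al (nth ord0 (enum O) 1)).
have := K pp qs; rewrite big1.
  by move/esym/eqP; rewrite !mulf_eq0 invr_eq0 (negbTE nine_neq0) (negbTE Hpp) (negbTE Hqs).
move=> k _; case: (boolP (live k)) => Hk; last exact: dead0.
have [r Hr Hkr] := rep_ex Hk.
case: (boolP (r \in [set i; j; l])) => HrI.
  have Hkc : k \in cls r by rewrite inE Hk Hkr.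
  move: HrI; rewrite !inE => /orP[/orP[]|] /eqP Er; subst r.
  - by rewrite (S1k _ _ Hi Hkc) Hqsi mulr0.
  - by rewrite (S1k _ _ Hj Hkc) Hqj mulr0.
  - by rewrite (S1k _ _ Hl Hkc) Hql mulr0.
have HrO : r \in O by rewrite in_setD HrI.
have Hnr := live_nzal (R_live Hr).
have [[|[|n]] Hn Er] := HcovO r HrO => //.
- by rewrite (ev3_prop0 Hkr Hnr) ?mul0r // Er.
- by rewrite (ev3_prop0 Hkr Hnr) ?mul0r // Er.
Qed.

Lemma cardRD3 (i j l : 'I_7) : i \in R -> j \in R -> l \in R ->
  i != j -> i != l -> j != l -> #|R :\: [set i; j; l]| = (#|R| - 3)%N.
Proof.
move=> Hi Hj Hl Hij Hil Hjl.
have HT : [set i; j; l] \subset R.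
  apply/subsetP => y Hy; have : (y == i) || (y == j) || (y == l) by move: Hy; rewrite !inE.
  by case/orP => [/orP[]|] /eqP ->.
have cT : #|[set i; j; l]| = 3%N.
  have -> : [set i; j; l] = i |: [set j; l] by apply/setP => y; rewrite !inE orbA.
  by rewrite cardsU1 cards2 !inE negb_or Hij Hil Hjl.
by rewrite cardsD (setIidPr HT) cT.
Qed.

Lemma cover_card (g : 'I_5 -> vec2) : (forall t, nz (g t)) ->
  (forall k, live k -> exists t, prop (al k) (g t)) -> (#|R| <= 5)%N.
Proof.
move=> Hg Hcov.
pose f r := odflt ord0 [pick t | prop (al r) (g t)].
have Hf : forall r, r \in R -> prop (al r) (g (f r)).
  move=> r Hr; rewrite /f; case: pickP => [t Ht //|H0].
  have [t Ht] := Hcov r (R_live Hr); by move: (H0 t); rewrite Ht.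
have -> : #|R| = #|f @: R|.
  apply/esym/card_in_imset => r r' Hr Hr' Efr.
  apply/eqP; apply/negPn/negP => Hne.
  have := R_np Hr Hr' Hne; rewrite (prop_trans (Hg (f r)) (Hf r Hr)) //.
  by rewrite Efr prop_sym Hf.
by have := max_card (mem (f @: R)); rewrite card_ord.
Qed.

Lemma B6 : #|R| = 6%N -> exists g : 'I_5 -> vec2, (forall t, nz (g t)) /\
  (forall k, live k -> exists t, prop (be k) (g t)).
Proof.
move=> HR.
set B2 := [set r in R | (1 < #|cls r|)%N].
have inB2 r : (r \in B2) = (r \in R) && (1 < #|cls r|)%N by rewrite inE.
have HB2R : B2 \subset R by apply/subsetP => r; rewrite inB2 => /andP[].
have HB2 := count_big; rewrite -/B2 HR in HB2.
set S1 := R :\: B2.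
have HS1 : (3 <= #|S1|)%N.
  rewrite cardsD (setIidPr HB2R) HR; lia.
have S1R r : r \in S1 -> r \in R by rewrite in_setD => /andP[].
have S1c r : r \in S1 -> (#|cls r| <= 1)%N.
  by rewrite in_setD inB2 => /andP[+ Hr]; rewrite Hr /= -leqNgt.
have S1k r k : r \in S1 -> k \in cls r -> k = r.
  by move=> Hr; apply: single_cls (S1R _ Hr) (S1c _ Hr).
have [i [j [l0 [Hi Hj _ [Hij _ _]]]]] := card3_elems HS1.
have [m [Hm Hq0]] := Q0ex (be i) (be j).
set q0 := mul3 (lin (be i)) (lin (be j)) m.
have q0i : ev3 q0 (be i) = 0 by rewrite ev3_mul3 ev1_lin0 ?prop_refl // !mul0r.
have q0j : ev3 q0 (be j) = 0 by rewrite ev3_mul3 [ev1 (lin (be j)) _]ev1_lin0 ?prop_refl // mulr0 mul0r.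
have step : forall x, x \in S1 -> x != i -> x != j -> ev3 q0 (be x) = 0.
  move=> x Hx Hxi Hxj.
  set S := R :\: [set i; j; x].
  have HS : (#|S| <= 3)%N.
    rewrite cardRD3 ?HR //; try exact: S1R. all: try by rewrite eq_sym.
  set p := killp S x.
  have kill : forall k, live k -> k != i -> k != j -> k != x -> ev3 p (al k) = 0.
    move=> k Hk Hki Hkj Hkx; apply: kill_notin => // r Hr.
    rewrite in_setD Hr andbT negbK => HrT.
    have : (r == i) || (r == j) || (r == x) by move: HrT; rewrite !inE.
    case/orP => [/orP[]|] /eqP ->; apply/negP => Hkr.
    - by move: Hki; rewrite (S1k _ _ Hi Hkr) eqxx.
    - by move: Hkj; rewrite (S1k _ _ Hj Hkr) eqxx.
    - by move: Hkx; rewrite (S1k _ _ Hx Hkr) eqxx.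
  have Hpx : ev3 p (al x) != 0.
    apply: killp_nz; first exact: (live_nzal (R_live (S1R _ Hx))).
    move=> r; rewrite in_setD => /andP[Hr HrR]; apply: R_np => //; first exact: S1R.
    apply: (contraNneq _ Hr) => <-; by rewrite !inE eqxx orbT.
  have := K p q0; rewrite Hq0 mulr0 mul0r (bigD1 x) //= big1 ?addr0.
    by move/eqP; rewrite mulf_eq0 (negbTE Hpx) /= => /eqP.
  move=> k Hkx; case: (boolP (live k)) => Hk; last exact: dead0.
  case: (eqVneq k i) => [->|Hki]; first by rewrite q0i mulr0.
  case: (eqVneq k j) => [->|Hkj]; first by rewrite q0j mulr0.
  by rewrite kill // mul0r.
have HB2' : (#|B2| <= 1)%N by lia.
set c := nth ord0 (enum B2) 0.
have B2c : forall r, r \in B2 -> r = c.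
  by move=> r /(enum_small ord0 HB2') [[|n] Hn ->].
have Hcc : forall r, r \in B2 -> (#|cls r| <= 2)%N.
  move=> r Hr; have HrR : r \in R by move/subsetP: HB2R; apply.
  have := sum_cls; rewrite (bigD1 r) //=.
  have : (#|R :\ r| <= \sum_(i0 in R | i0 != r) #|cls i0|)%N.
    have -> : #|R :\ r| = (\sum_(i0 in R | i0 != r) 1)%N.
      rewrite sum1_card; apply: eq_card => y; by rewrite in_setD1 andbC.
    apply: leq_sum => r' /andP[Hr' _].
    by apply/card_gt0P; exists r'; apply: cls_self.
  rewrite cardRD1 // HR => H1 H2.
  rewrite -(leq_add2r 5); exact: (leq_trans (leq_add (leqnn _) H1) H2).
set c1 := nth ord0 (enum (cls c)) 0; set c2 := nth ord0 (enum (cls c)) 1.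
pose g := fun t : 'I_5 => nth e0v [:: be i; be j; rho m; nzify (be c1); nzify (be c2)] t.
exists g; split.
  move=> t; rewrite /g; case: t => [[|[|[|[|[|//]]]]] Ht] /=.
  - exact: (live_nzbe (R_live (S1R _ Hi))).
  - exact: (live_nzbe (R_live (S1R _ Hj))).
  - exact: nz_rho.
  - exact: nz_nzify.
  - exact: nz_nzify.
move=> k Hk; have [r Hr Hkr] := rep_ex Hk.
have Hkc : k \in cls r by rewrite inE Hk Hkr.
case: (boolP (r \in B2)) => HrB.
  have Er := B2c r HrB; subst r.
  have [[|[|n]] Hn Ek] := enum_small ord0 (Hcc c HrB) Hkc => //.
  - exists (@Ordinal 5 3 isT); rewrite /g /= /c1 -Ek nzifyE ?prop_refl //; exact: live_nzbe.
  - exists (@Ordinal 5 4 isT); rewrite /g /= /c2 -Ek nzifyE ?prop_refl //; exact: live_nzbe.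
have HrS : r \in S1 by rewrite in_setD HrB.
have Ekr := S1k _ _ HrS Hkc; subst r.
case: (eqVneq k i) => [->|Hki]; first by exists (@Ordinal 5 0 isT); rewrite /g /= prop_refl.
case: (eqVneq k j) => [->|Hkj]; first by exists (@Ordinal 5 1 isT); rewrite /g /= prop_refl.
have := step k HrS Hki Hkj; rewrite ev3_mul3 => /eqP; rewrite !mulf_eq0 => /orP[/orP[]|] /eqP H.
- by exists (@Ordinal 5 0 isT); rewrite /g /= -ev1_lin H.
- by exists (@Ordinal 5 1 isT); rewrite /g /= -ev1_lin H.
- by exists (@Ordinal 5 2 isT); rewrite /g /=; apply: ev1_rho.
Qed.

Definition hev (A B : 'rV[C]_4) (x y : vec2) : C := ev3 A x * y o1 + ev3 B x * y o0.

Lemma rel31 A B : \sum_(k < 7) (be k o1) ^+ 2 * hev A B (al k) (be k) = 0.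
Proof.
transitivity (\sum_(k < 7) ev3 A (al k) * ev3 (mkc 1 0 0 0) (be k) +
              \sum_(k < 7) ev3 B (al k) * ev3 (mkc 0 1 0 0) (be k)).
  rewrite -big_split; apply: eq_bigr => k _; rewrite /hev !ev3_mkc /=; ring.
by rewrite !K !cq2_mkc !mulr0 !mul0r addr0.
Qed.

Lemma mem31 A B : (forall k, hev A B (al k) (be k) = 0) -> cq2 A = 0 /\ cq2 B = 0.
Proof.
move=> H; split.
  have : \sum_(k < 7) (be k o0) ^+ 2 * hev A B (al k) (be k) = 0.
    by rewrite big1 // => k _; rewrite H mulr0.
  have -> : \sum_(k < 7) (be k o0) ^+ 2 * hev A B (al k) (be k) =
    \sum_(k < 7) ev3 A (al k) * ev3 (mkc 0 0 1 0) (be k) +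
    \sum_(k < 7) ev3 B (al k) * ev3 (mkc 0 0 0 1) (be k).
    rewrite -big_split; apply: eq_bigr => k _; rewrite /hev !ev3_mkc /=; ring.
  rewrite !K !cq2_mkc mulr0 mul0r addr0 mulr1 => /eqP.
  by rewrite mulf_eq0 invr_eq0 (negbTE nine_neq0) orbF => /eqP.
have : \sum_(k < 7) (be k o0 * be k o1) * hev A B (al k) (be k) = 0.
  by rewrite big1 // => k _; rewrite H mulr0.
have -> : \sum_(k < 7) (be k o0 * be k o1) * hev A B (al k) (be k) =
  \sum_(k < 7) ev3 A (al k) * ev3 (mkc 0 1 0 0) (be k) +
  \sum_(k < 7) ev3 B (al k) * ev3 (mkc 0 0 1 0) (be k).
  rewrite -big_split; apply: eq_bigr => k _; rewrite /hev !ev3_mkc /=; ring.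
rewrite !K !cq2_mkc mulr0 mul0r add0r mulr1 => /eqP.
by rewrite mulf_eq0 invr_eq0 (negbTE nine_neq0) orbF => /eqP.
Qed.

Definition c4 (A : 'rV[C]_4) (i : nat) : C := A 0 (inord i).

Lemma ev3c (A : 'rV[C]_4) x : ev3 A x =
  c4 A 0 * x o1 ^+ 3 + c4 A 1 * x o0 * x o1 ^+ 2 + c4 A 2 * x o0 ^+ 2 * x o1 + c4 A 3 * x o0 ^+ 3.
Proof.
rewrite ev3E /c4; congr (_ * _ + _ * _ * _ + _ * _ * _ + _ * _); congr (A 0 _); apply: val_inj; by rewrite /= inordK.
Qed.

Lemma c4_cq2 A : c4 A 2 = cq2 A.
Proof. by rewrite /c4 /cq2; congr (A 0 _); apply: val_inj; rewrite /= inordK. Qed.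

Lemma c4_eq0 A : c4 A 0 = 0 -> c4 A 1 = 0 -> c4 A 2 = 0 -> c4 A 3 = 0 -> A = 0.
Proof.
move=> H0 H1 H2 H3; apply/rowP => j; rewrite mxE.
have -> : j = inord j by rewrite inord_val.
case: j => [[|[|[|[|//]]]] Hj] /=; [exact: H0 | exact: H1 | exact: H2 | exact: H3].
Qed.

Lemma c4B A B i : c4 (A - B) i = c4 A i - c4 B i.
Proof. by rewrite /c4 !mxE. Qed.
Lemma c4Z l A i : c4 (l *: A) i = l * c4 A i.
Proof. by rewrite /c4 !mxE. Qed.
Lemma c4_ext A B : c4 A 0 = c4 B 0 -> c4 A 1 = c4 B 1 -> c4 A 2 = c4 B 2 -> c4 A 3 = c4 B 3 -> A = B.
Proof.
move=> H0 H1 H2 H3; apply/eqP; rewrite -subr_eq0; apply/eqP; apply: c4_eq0; by rewrite c4B ?H0 ?H1 ?H2 ?H3 subrr.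
Qed.

Lemma prodform_false (X : 'rV[C]_4) (L : C * C) :
  (forall k l, k != l -> ~~ prop (al k) (al l)) -> (forall k l, k != l -> ~~ prop (be k) (be l)) ->
  (forall k, live k) ->
  X != 0 -> (L.1 != 0) || (L.2 != 0) -> (forall k, ev3 X (al k) * ev1 L (be k) = 0) -> False.
Proof.
move=> Hal Hbe Hlive HX HL Hk.
pose k1 := odflt ord0 [pick k | ev1 L (be k) == 0].
have Hk1 : forall k, k != k1 -> ev1 L (be k) != 0.
  move=> k Hkk1; apply/negP => /eqP Hz.
  move: Hkk1; rewrite /k1; case: pickP => [k' /eqP Hk' | H] /= Hne.
  - have := Hbe _ _ Hne; rewrite (prop_trans (nz_rho HL) (ev1_rho Hz)) //.
    by rewrite prop_sym; apply: ev1_rho.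
  - by move: (H k); rewrite Hz eqxx.
have HZ : forall e, (e <= 3)%N -> c4 X e = 0.
  apply: (@roots_form 3 6 (c4 X) (fun j => al (lift k1 j)) isT).
  - move=> j; exact: (live_nzal (Hlive _)).
  - move=> i j Hij; apply: Hal; by rewrite (inj_eq (@lift_inj _ k1)).
  - move=> j; have Hne : lift k1 j != k1 by rewrite eq_sym neq_lift.
    have := Hk (lift k1 j); move/eqP; rewrite mulf_eq0 (negbTE (Hk1 _ Hne)) orbF.
    rewrite ev3c => /eqP H0; rewrite -[RHS]H0 /=.
    rewrite !big_ord_recr big_ord0 /=; ring.
by move/negP: HX; apply; apply/eqP; apply: c4_eq0; apply: HZ.
Qed.

Lemma Match : (forall k l, k != l -> ~~ prop (al k) (al l)) ->
  (forall k l, k != l -> ~~ prop (be k) (be l)) -> (forall k, live k) -> False.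
Proof.
move=> Hal Hbe Hlive.
have [k0 Hk0] : exists k0 : 'I_7, be k0 o1 != 0.
  case: (boolP (be ord0 o1 == 0)) => H0; last by exists ord0.
  case: (boolP (be (@Ordinal 7 1 isT) o1 == 0)) => H1; last by exists (Ordinal (isT : (1 < 7)%N)).
  have : (ord0 : 'I_7) != Ordinal (isT : (1 < 7)%N) by [].
  move/Hbe; rewrite /prop (eqP H0) (eqP H1) mulr0 mul0r eqxx //.
pose Mv : 'M[C]_(4, 6) := \matrix_(i, j) (mon i (al (lift k0 j)) * be (lift k0 j) o1).
pose Mu : 'M[C]_(4, 6) := \matrix_(i, j) (mon i (al (lift k0 j)) * be (lift k0 j) o0).
pose M6 : 'M[C]_(4 + 4, 6) := col_mx Mv Mu.
have M6E : forall (x : 'rV[C]_(4 + 4)) j,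
    (x *m M6) 0 j = hev (lsubmx x) (rsubmx x) (al (lift k0 j)) (be (lift k0 j)).
  move=> x j; rewrite -{1}(hsubmxK x) mul_row_col mxE !mxE /hev /ev3 !big_distrl /=.
  congr (_ + _); apply: eq_bigr => i _; rewrite !mxE mulrA //.
have good : forall x : 'rV[C]_(4 + 4), x *m M6 = 0 ->
    forall k, hev (lsubmx x) (rsubmx x) (al k) (be k) = 0.
  move=> x Hx.
  have Hl : forall j, hev (lsubmx x) (rsubmx x) (al (lift k0 j)) (be (lift k0 j)) = 0.
    by move=> j; rewrite -M6E Hx mxE.
  move=> k; case: (unliftP k0 k) => [j ->|->]; first exact: Hl.
  have := rel31 (lsubmx x) (rsubmx x); rewrite (bigD1 k0) //= big1 ?addr0.
    by move/eqP; rewrite mulf_eq0 expf_eq0 (negbTE Hk0) andbF /= => /eqP.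
  move=> k' Hk; case: (unliftP k0 k') => [j Ej|Ej]; last by move: Hk; rewrite Ej eqxx.
  by rewrite Ej Hl mulr0.
have [x1 [Hx1 Hx1M]] := NZK M6 (isT : (6 < 4 + 4)%N).
have [j0 Hj0] : exists j0, x1 0 j0 != 0.
  apply/existsP; apply: contraR Hx1; rewrite negb_exists => /forallP H.
  apply/eqP/rowP => j; rewrite mxE; exact/eqP/negPn/H.
pose E : 'M[C]_(4 + 4, 1) := \col_i (i == j0)%:R.
have [x2 [Hx2 Hx2M]] := NZK (row_mx M6 E) (isT : (6 + 1 < 4 + 4)%N).
move: Hx2M; rewrite mul_mx_row => /eqP; rewrite row_mx_eq0 => /andP[/eqP Hx2M /eqP Hx2E].
have Hx2j0 : x2 0 j0 = 0.
  move/matrixP: Hx2E => /(_ 0 0); rewrite !mxE (bigD1 j0) //= big1 ?addr0.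
    by rewrite !mxE eqxx mulr1.
  by move=> i Hi; rewrite !mxE (negbTE Hi) mulr0.
have g1 := good _ Hx1M; have g2 := good _ Hx2M.
set A := lsubmx x1; set B := rsubmx x1; set Cc := lsubmx x2; set D := rsubmx x2.
have [A2 B2] := mem31 g1; have [C2 D2] := mem31 g2.
have Ex1 : x1 = row_mx A B by rewrite hsubmxK.
have Ex2 : x2 = row_mx Cc D by rewrite hsubmxK.
have Hdelta : forall k, ev3 A (al k) * ev3 D (al k) - ev3 B (al k) * ev3 Cc (al k) = 0.
  move=> k; have h1 := g1 k; have h2 := g2 k; rewrite /hev -/A -/B in h1; rewrite /hev -/Cc -/D in h2.
  have E1 : (ev3 A (al k) * ev3 D (al k) - ev3 B (al k) * ev3 Cc (al k)) * be k o1 =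
     ev3 D (al k) * (ev3 A (al k) * be k o1 + ev3 B (al k) * be k o0)
     - ev3 B (al k) * (ev3 Cc (al k) * be k o1 + ev3 D (al k) * be k o0) by ring.
  have E0 : (ev3 A (al k) * ev3 D (al k) - ev3 B (al k) * ev3 Cc (al k)) * be k o0 =
     ev3 A (al k) * (ev3 Cc (al k) * be k o1 + ev3 D (al k) * be k o0)
     - ev3 Cc (al k) * (ev3 A (al k) * be k o1 + ev3 B (al k) * be k o0) by ring.
  rewrite h1 h2 !mulr0 subrr in E1 E0.
  move: (live_nzbe (Hlive k)); rewrite /nz => /orP[] H.
    by move/eqP: E0; rewrite mulf_eq0 (negbTE H) orbF => /eqP.
  by move/eqP: E1; rewrite mulf_eq0 (negbTE H) orbF => /eqP.
set a0 := c4 A 0; set a1 := c4 A 1; set a3 := c4 A 3.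
set b0 := c4 B 0; set b1 := c4 B 1; set b3 := c4 B 3.
set c0 := c4 Cc 0; set c1 := c4 Cc 1; set c3 := c4 Cc 3.
set d0 := c4 D 0; set d1 := c4 D 1; set d3 := c4 D 3.
pose cd := fun e => nth 0 [:: a0 * d0 - b0 * c0; a0 * d1 + a1 * d0 - b0 * c1 - b1 * c0;
   a1 * d1 - b1 * c1; a0 * d3 + a3 * d0 - b0 * c3 - b3 * c0;
   a1 * d3 + a3 * d1 - b1 * c3 - b3 * c1; 0; a3 * d3 - b3 * c3] e.
have HZ : forall e, (e <= 6)%N -> cd e = 0.
  apply: (@roots_form 6 7 cd al isT).
  - move=> k; exact: (live_nzal (Hlive k)).
  - exact: Hal.
  - move=> k; rewrite -[X in _ = X](Hdelta k) !ev3c !c4_cq2 A2 B2 C2 D2 -/a0 -/a1 -/a3 -/b0 -/b1 -/b3 -/c0 -/c1 -/c3 -/d0 -/d1 -/d3.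
    rewrite !big_ord_recr big_ord0 /cd /=; ring.
have Z0 := HZ 0%N isT; have Z1 := HZ 1%N isT; have Z2 := HZ 2%N isT; have Z3 := HZ 3%N isT.
have Z4 := HZ 4%N isT; have Z6 := HZ 6%N isT.
rewrite /cd /= in Z0 Z1 Z2 Z3 Z4 Z6.
have key : forall y0 y1 y2 : C,
   ((b1 * a3 - b3 * a1) * y0 + (b3 * a0 - b0 * a3) * y1 + (b0 * a1 - b1 * a0) * y2) *
   ((c1 * a3 - c3 * a1) * y0 + (c3 * a0 - c0 * a3) * y1 + (c0 * a1 - c1 * a0) * y2) = 0.
  move=> y0 y1 y2.
  have Ek : ((b1 * a3 - b3 * a1) * y0 + (b3 * a0 - b0 * a3) * y1 + (b0 * a1 - b1 * a0) * y2) *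
   ((c1 * a3 - c3 * a1) * y0 + (c3 * a0 - c0 * a3) * y1 + (c0 * a1 - c1 * a0) * y2) =
   - ((a0 * d0 - b0 * c0) * (a1 * y2 - a3 * y1) ^+ 2
      + (a0 * d1 + a1 * d0 - b0 * c1 - b1 * c0) * (a1 * y2 - a3 * y1) * (a3 * y0 - a0 * y2)
      + (a1 * d1 - b1 * c1) * (a3 * y0 - a0 * y2) ^+ 2
      + (a0 * d3 + a3 * d0 - b0 * c3 - b3 * c0) * (a1 * y2 - a3 * y1) * (a0 * y1 - a1 * y0)
      + (a1 * d3 + a3 * d1 - b1 * c3 - b3 * c1) * (a3 * y0 - a0 * y2) * (a0 * y1 - a1 * y0)
      + (a3 * d3 - b3 * c3) * (a0 * y1 - a1 * y0) ^+ 2) by ring.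
  by rewrite Ek Z0 Z1 Z2 Z3 Z4 Z6 !mul0r !addr0 oppr0.
have c4A2 : c4 A 2 = 0 by rewrite c4_cq2.
have c4B2 : c4 B 2 = 0 by rewrite c4_cq2.
have c4C2 : c4 Cc 2 = 0 by rewrite c4_cq2.
have c4D2 : c4 D 2 = 0 by rewrite c4_cq2.
have PF := prodform_false Hal Hbe Hlive.
case: (boolP ((a0 != 0) || (a1 != 0) || (a3 != 0))) => Anz; last first.
  have A0 : A = 0.
    move: Anz; rewrite !negb_or !negbK => /andP[/andP[/eqP H0 /eqP H1] /eqP H3].
    exact: c4_eq0.
  apply: (PF B (1, 0)) => //.
  - apply: contra Hx1 => /eqP HB; by rewrite Ex1 A0 HB row_mx0.
  - by rewrite oner_neq0.
  - move=> k; have := g1 k; rewrite /hev -/A -/B A0 ev3_0 /ev1 /=.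
    move=> H; rewrite -[RHS]H; ring.
have [U|W] := prod3_zero key.
- case: U => [U1 [U2 U3]].
  have [l [Hl0 Hl1 Hl3]] := par_scale Anz U1 U2 U3.
  have EB : B = l *: A.
    by apply: c4_ext; rewrite c4Z // c4A2 c4B2 mulr0.
  apply: (PF A (l, 1)) => //.
  - apply/negP => /eqP A0; move: Anz; by rewrite /a0 /a1 /a3 A0 /c4 !mxE eqxx.
  - by rewrite oner_neq0 orbT.
  - move=> k; have := g1 k; rewrite /hev -/A -/B EB ev3Z /ev1 /= => H.
    by rewrite -[RHS]H; ring.
- case: W => [W1 [W2 W3]].
  have [l [Hl0 Hl1 Hl3]] := par_scale Anz W1 W2 W3.
  have EC : Cc = l *: A.
    by apply: c4_ext; rewrite c4Z // c4A2 c4C2 mulr0.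
  apply: (PF (D - l *: B) (1, 0)) => //.
  - apply/negP => /eqP HD; move/eqP: HD; rewrite subr_eq0 => /eqP HD.
    have Ex : x2 = l *: x1 by rewrite Ex2 Ex1 EC HD scale_row_mx.
    have : x2 0 j0 = l * x1 0 j0 by rewrite Ex mxE.
    rewrite Hx2j0 => /esym/eqP; rewrite mulf_eq0 (negbTE Hj0) orbF => /eqP Hl.
    by move: Hx2; rewrite Ex Hl scale0r eqxx.
  - by rewrite oner_neq0.
  - move=> k; have H1 := g1 k; have H2 := g2 k.
    rewrite /hev -/A -/B in H1; rewrite /hev -/Cc -/D EC ev3Z in H2.
    rewrite ev3B ev3Z /ev1 /=.
    have E' : (ev3 D (al k) - l * ev3 B (al k)) * (1 * be k o0 + 0 * be k o1) =
      (l * ev3 A (al k) * be k o1 + ev3 D (al k) * be k o0) - l * (ev3 A (al k) * be k o1 + ev3 B (al k) * be k o0) by ring.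
    by rewrite E' H1 H2 mulr0 subr0.
Qed.
End Main.

Lemma swapK (al be : 'I_7 -> vec2) :
  (forall p q : 'rV[C]_4, \sum_(k < 7) ev3 p (al k) * ev3 q (be k) = cq2 p * cq2 q / 9%:R) ->
  (forall p q : 'rV[C]_4, \sum_(k < 7) ev3 p (be k) * ev3 q (al k) = cq2 p * cq2 q / 9%:R).
Proof.
move=> K p q; rewrite (eq_bigr (fun k => ev3 q (al k) * ev3 p (be k))); last by move=> k _; rewrite mulrC.
by rewrite K (mulrC (cq2 q)).
Qed.

Lemma le6 (al be : 'I_7 -> vec2) :
  (forall p q : 'rV[C]_4, \sum_(k < 7) ev3 p (al k) * ev3 q (be k) = cq2 p * cq2 q / 9%:R) ->
  (#|R al be| <= 6)%N -> False.
Proof.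
move=> K H6; have K' := swapK K.
case: (ltngtP #|R al be| 5) => H.
- by apply: (A4 K); rewrite -ltnS.
- have H6' : #|R al be| = 6%N by apply/eqP; rewrite eqn_leq H6 H.
  have [g [Hg Hcov]] := B6 K H6'.
  have Hc : (#|R be al| <= 5)%N.
    apply: (cover_card Hg) => k Hk; apply: Hcov; by rewrite /live andbC.
  case: (ltngtP #|R be al| 5) => H'.
  + by apply: (A4 K'); rewrite -ltnS.
  + by move: Hc; rewrite leqNgt H'.
  + exact: (A5 K' H').
- exact: (A5 K H).
Qed.

Lemma R_full (al be : 'I_7 -> vec2) : (6 < #|R al be|)%N -> forall k, k \in R al be.
Proof.
move=> H k.
have : R al be = setT.
  apply/eqP; rewrite eqEcard subsetT cardsT card_ord.
  by apply: leq_trans H.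
by move=> ->; rewrite inE.
Qed.

Lemma lower (al be : 'I_7 -> vec2) :
  (forall p q : 'rV[C]_4, \sum_(k < 7) ev3 p (al k) * ev3 q (be k) = cq2 p * cq2 q / 9%:R) ->
  False.
Proof.
move=> K; have K' := swapK K.
case: (leqP #|R al be| 6) => H1; first exact: le6 K H1.
case: (leqP #|R be al| 6) => H2; first exact: le6 K' H2.
have F1 := R_full H1; have F2 := R_full H2.
apply: (Match K).
- by move=> k l Hkl; apply: R_np.
- by move=> k l Hkl; apply: R_np.
- by move=> k; apply: R_live.
Qed.

Lemma pad_K (s : nat) (v w : 'I_s -> vec2) : (s <= 7)%N ->
  (forall p q : 'rV[C]_4, \sum_(k < s) ev3 p (v k) * ev3 q (w k) = cq2 p * cq2 q / 9%:R) ->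
  exists al be : 'I_7 -> vec2,
  (forall p q : 'rV[C]_4, \sum_(k < 7) ev3 p (al k) * ev3 q (be k) = cq2 p * cq2 q / 9%:R).
Proof.
move=> Hs Ks.
pose V (n : nat) : vec2 := if (insub n : option 'I_s) is Some i then v i else (fun _ => 0).
pose W (n : nat) : vec2 := if (insub n : option 'I_s) is Some i then w i else (fun _ => 0).
exists (fun k => V k), (fun k => W k) => p q.
have z : ev3 p (fun _ => 0) = 0 by rewrite ev3E; ring.
pose G (n : nat) : C := ev3 p (V n) * ev3 q (W n).
have -> : \sum_(k < 7) ev3 p (V k) * ev3 q (W k) = \sum_(k < 7) G k by [].
rewrite -(Ks p q).
have -> : \sum_(k < s) ev3 p (v k) * ev3 q (w k) = \sum_(k < s) G k.
  by apply: eq_bigr => k _; rewrite /G /V /W valK.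
rewrite (big_ord_widen 7 G Hs) [in RHS]big_mkcond /=; apply: eq_bigr => k _.
case: ifP => // Hk; rewrite /G /V insubF ?Hk // z mul0r //.
Qed.

Local Close Scope ring_scope.

Theorem proposition4p2 : ps_rank_is W3W3 8.
Proof.
split; first exact: upper.
move=> s [v [w Hdec]]; rewrite leqNgt; apply/negP => Hs.
have [al [be K]] := pad_K (Hs : (s <= 7)%N) (Key Hdec).
exact: lower K.
Qed.
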